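(* Let $r\ge5$, let $A$ be an independent set in $G(n,r,1)$, let $A_0=\{v_1,\dots,v_k\}$, $I_0$, $A_1$, $P$ be as in the context, and fix $x\in[n]\setminus(I_0\cup P)$. For $i=1,\dots,k$ let $B_i=\{v\in A_1: x\in v,\ v\cap v_i\ne\emptyset\}$, and for each $v\in B_i$ let $f(v)=v\setminus\{x,y,z\}$ where $y,z$ are two (arbitrarily chosen) distinct elements of $v\cap v_i$. Let $\omega=r^5\binom{n}{r-5}$. If $i\ne j$, $B_i\ne\emptyset$ and $|B_j|\ge\omega$, then $f(u_1)\cap f(u_2)\ne\emptyset$ for all $u_1,u_2\in B_i$.
   Context: $G(n,r,1)$ is the graph on $[n]^{(r)}$ in which two $r$-subsets are adjacent iff they intersect in exactly one element; members of an independent set pairwise intersect in $0$ or at least $2$ elements, so each $v\in B_i$ has $|v\cap v_i|\ge2$. $A_0=\{v_1,\dots,v_k\}\subset A$ is a subfamily of pairwise disjoint sets of maximum cardinality, $I_0=v_1\cup\dots\cup v_k$, $A_1$ is the set of $v\in A\setminus A_0$ intersecting exactly one $v_i$. Distinct elements $x,y$ are joint if every $v\in A_1$ satisfies $|v\cap\{x,y\}|\ne1$; $P$ is the set of elements of $[n]\setminus I_0$ joint with some other element of $[n]\setminus I_0$. *)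

(* Defs.v *)
From mathcomp Require Import all_boot.
Set Implicit Arguments. Unset Strict Implicit. Unset Printing Implicit Defensive.

Section Defs.
Variable n : nat.
Notation fam := {set {set 'I_n}}.

Definition r_uniform (r : nat) (A : fam) := forall v, v \in A -> #|v| = r.

(* independent set in G(n,r,1): distinct members never meet in exactly one element *)
Definition independent_nr1 (A : fam) :=
  forall u w, u \in A -> w \in A -> u != w -> #|u :&: w| != 1.

Definition pw_disjoint (F : fam) :=
  forall u w, u \in F -> w \in F -> u != w -> [disjoint u & w].

Definition max_disjoint_subfamily (A A0 : fam) :=
  [/\ A0 \subset A, pw_disjoint A0 &
      forall F : fam, F \subset A -> pw_disjoint F -> #|F| <= #|A0|].

Definition I0 (A0 : fam) : {set 'I_n} := \bigcup_(v in A0) v.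

Definition A1 (A A0 : fam) : fam :=
  [set v in A :\: A0 | #|[set w in A0 | ~~ [disjoint v & w]]| == 1].

Definition joint (A A0 : fam) (x y : 'I_n) :=
  x != y /\ forall v, v \in A1 A A0 -> #|v :&: [set x; y]| != 1.

Definition inP (A A0 : fam) (x : 'I_n) :=
  x \notin I0 A0 /\ exists y, y \notin I0 A0 /\ joint A A0 x y.

Definition Bset (A A0 : fam) (x : 'I_n) (vi : {set 'I_n}) : fam :=
  [set v in A1 A A0 | (x \in v) && ~~ [disjoint v & vi]].
End Defs.

(* Main.v *)
Require Import Defs.
From mathcomp Require Import all_boot.
From mathcomp Require Import zify.

Set Implicit Arguments. Unset Strict Implicit.

Lemma A1_other n (A A0 : {set {set 'I_n}}) v a b :
  v \in A1 A A0 -> a \in A0 -> b \in A0 -> a != b ->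
  ~~ [disjoint v & a] -> [disjoint v & b].
Proof.
rewrite inE => /andP[_ /cards1P[c Hc]] Ha Hb Hab Hva.
apply/negPn/negP => Hvb.
have : b \in [set w in A0 | ~~ [disjoint v & w]] by rewrite inE Hb Hvb.
have : a \in [set w in A0 | ~~ [disjoint v & w]] by rewrite inE Ha Hva.
by rewrite Hc !inE => /eqP Hac /eqP Hbc; rewrite Hac Hbc eqxx in Hab.
Qed.

Lemma A1_in n (A A0 : {set {set 'I_n}}) v :
  v \in A1 A A0 -> v \in A /\ v \notin A0.
Proof. by rewrite !inE => /andP[/andP[-> ->]]. Qed.

Lemma meet2 n (A : {set {set 'I_n}}) v a :
  independent_nr1 A -> v \in A -> a \in A -> v != a ->
  ~~ [disjoint v & a] -> 1 < #|v :&: a|.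
Proof.
move=> Hind Hv Ha Hva Hd.
have H0 : 0 < #|v :&: a| by rewrite card_gt0 setI_eq0.
have := Hind _ _ Hv Ha Hva.
move: H0; case: #|v :&: a| => [|[|k]] //.
Qed.

Lemma notdisj n (v a : {set 'I_n}) e : e \in v -> e \in a -> ~~ [disjoint v & a].
Proof. move=> H1 H2; apply/negP => Hd; by rewrite (disjointFr Hd H1) in H2. Qed.

Theorem lemma7 (n r : nat) (A A0 : {set {set 'I_n}}) (x : 'I_n)
    (vi vj : {set 'I_n}) :
  5 <= r ->
  r_uniform r A -> independent_nr1 A ->
  max_disjoint_subfamily A A0 ->
  x \notin I0 A0 -> ~ inP A A0 x ->
  vi \in A0 -> vj \in A0 -> vi != vj ->
  Bset A A0 x vi != set0 ->
  r ^ 5 * 'C(n, r - 5) <= #|Bset A A0 x vj| ->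
  forall f : {set 'I_n} -> {set 'I_n},
    (forall v, v \in Bset A A0 x vi ->
       exists y z, [/\ y != z, y \in v :&: vi, z \in v :&: vi &
                       f v = v :\: [set x; y; z]]) ->
  forall u1 u2, u1 \in Bset A A0 x vi -> u2 \in Bset A A0 x vi ->
    f u1 :&: f u2 != set0.
Proof.
move=> r5 Hunif Hind [A0A _ _] xI0 _ Hvi Hvj Hij _ Hbig f Hf u1 u2 Hu1 Hu2.
apply/negP => /eqP Hf12.
have A0A' : forall v, v \in A0 -> v \in A by move=> v; apply/subsetP.
have HB : forall w vk, w \in Bset A A0 x vk ->
   [/\ w \in A1 A A0, x \in w & ~~ [disjoint w & vk]].
  by move=> w vk; rewrite inE => /andP[-> /andP[-> ->]].
have Hji : vj != vi by rewrite eq_sym.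
have Hfu : forall u, u \in Bset A A0 x vi ->
   [/\ forall c, c \in f u -> c \in u /\ c != x,
       [disjoint u & vj] &
       forall e, e \in u -> e \notin vi -> e != x -> e \in f u].
  move=> u Hu; have [Hu1' xu Hm] := HB _ _ Hu.
  have [y [z [_ Hy Hz ->]]] := Hf u Hu.
  split.
  - move=> c; rewrite in_setD !inE => /andP[Hc ->]; split=> //.
    by apply: contra Hc => ->.
  - exact: A1_other Hu1' Hvi Hvj Hij Hm.
  move=> e eu evi ex; rewrite in_setD !inE eu negb_or negb_or ex /= andbT.
  move: Hy Hz; rewrite !inE => /andP[_ yvi] /andP[_ zvi].
  by apply/andP; split; apply: contra evi => /eqP ->.
have [Hfu1c Hu1j Hfu1e] := Hfu u1 Hu1.
have [Hfu2c Hu2j Hfu2e] := Hfu u2 Hu2.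
have Hkey : forall w u, w \in Bset A A0 x vj -> u \in Bset A A0 x vi ->
   exists e, e \in w :&: f u.
  move=> w u Hw Hu; have [Hw1 xw Hwm] := HB _ _ Hw.
  have [Hu1' xu Hum] := HB _ _ Hu.
  have [_ _ Hfe] := Hfu u Hu.
  have Hwi : [disjoint w & vi] := A1_other Hw1 Hvj Hvi Hji Hwm.
  have [wA _] := A1_in Hw1; have [uA _] := A1_in Hu1'.
  have Hwu : w != u.
    by apply/eqP => Ewu; rewrite Ewu (negbTE Hum) in Hwi.
  have := meet2 Hind wA uA Hwu (notdisj xw xu).
  case/card_gt1P => p [q [Hp Hq Hpq]].
  have [e [He ex]] : exists e, e \in w :&: u /\ e != x.
    case: (eqVneq p x) => [Epx|pnx]; last by exists p.
    by exists q; split=> //; rewrite -Epx eq_sym.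
  exists e; move: He; rewrite inE => /andP[ew eu].
  rewrite inE ew /=; apply: Hfe => //.
  by apply/negP => evi; rewrite (disjointFr Hwi ew) in evi.
pose cond := fun w (q : 'I_n * 'I_n * 'I_n * 'I_n) =>
  [&& q.1.1.1 \in w :&: vj, q.1.1.2 \in w :&: vj, q.1.1.1 != q.1.1.2,
      q.1.2 \in w :&: f u1 & q.2 \in w :&: f u2].
have Hex : forall w, w \in Bset A A0 x vj -> exists q, cond w q.
  move=> w Hw; have [Hw1 xw Hwm] := HB _ _ Hw.
  have [wA wA0] := A1_in Hw1.
  have wvj : w != vj by apply: contraNneq wA0 => ->.
  have := meet2 Hind wA (A0A' _ Hvj) wvj Hwm.
  case/card_gt1P => a [b [Ha Hb Hab]].
  have [c Hc] := Hkey w u1 Hw Hu1.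
  have [d Hd] := Hkey w u2 Hw Hu2.
  by exists (a, b, c, d); rewrite /cond /= Ha Hb Hab Hc Hd.
pose pickq w := odflt (x, x, x, x) [pick q | cond w q].
have Hpick : forall w, w \in Bset A A0 x vj -> cond w (pickq w).
  move=> w Hw; rewrite /pickq; case: pickP => [q Hq|Hn] //=.
  by have [q Hq] := Hex w Hw; rewrite Hn in Hq.
pose Tset (q : 'I_n * 'I_n * 'I_n * 'I_n) :=
  x |: (q.1.1.1 |: (q.1.1.2 |: (q.1.2 |: [set q.2]))).
have HT : forall w q, w \in Bset A A0 x vj -> cond w q ->
    Tset q \subset w /\ #|Tset q| = 5.
  move=> w [[[a b] c] d] Hw; have [Hw1 xw Hwm] := HB _ _ Hw.
  rewrite /cond /Tset /= !inE.
  case/and5P => /andP[aw avj] /andP[bw bvj] ab /andP[cw cf] /andP[dw df].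
  split; first by rewrite !subUset !sub1set xw aw bw cw dw.
  have [cu1 cx] := Hfu1c c cf.
  have [du2 dx] := Hfu2c d df.
  have xa : x != a by apply: contraNneq xI0 => ->; apply/bigcupP; exists vj.
  have xb : x != b by apply: contraNneq xI0 => ->; apply/bigcupP; exists vj.
  have xc : x != c by rewrite eq_sym.
  have xd : x != d by rewrite eq_sym.
  have ac : a != c by apply/eqP => E; rewrite -E in cu1; rewrite (disjointFr Hu1j cu1) in avj.
  have bc : b != c by apply/eqP => E; rewrite -E in cu1; rewrite (disjointFr Hu1j cu1) in bvj.
  have ad : a != d by apply/eqP => E; rewrite -E in du2; rewrite (disjointFr Hu2j du2) in avj.
  have bd : b != d by apply/eqP => E; rewrite -E in du2; rewrite (disjointFr Hu2j du2) in bvj.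
  have cd : c != d.
    apply/eqP => E; have : c \in f u1 :&: f u2 by rewrite inE cf E df.
    by rewrite Hf12 inE.
  rewrite !cardsU1 cards1 !inE.
  by rewrite (negbTE xa) (negbTE xb) (negbTE xc) (negbTE xd) (negbTE ab)
     (negbTE ac) (negbTE ad) (negbTE bc) (negbTE bd) (negbTE cd).
pose g w := (pickq w, w :\: Tset (pickq w)).
have ginj : {in Bset A A0 x vj &, injective g}.
  move=> w1 w2 H1 H2 [Eq ED].
  have [S1 _] := HT _ _ H1 (Hpick _ H1).
  have [S2 _] := HT _ _ H2 (Hpick _ H2).
  have E1 := setID w1 (Tset (pickq w1)); rewrite (setIidPr S1) in E1.
  have E2 := setID w2 (Tset (pickq w2)); rewrite (setIidPr S2) in E2.
  by rewrite -E1 -E2 ED Eq.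
pose Q := setX (setX (setX vj vj) (f u1)) (f u2).
have Himg : g @: Bset A A0 x vj \subset setX Q [set R : {set 'I_n} | #|R| == r - 5].
  apply/subsetP => p /imsetP[w Hw ->].
  have [S5 C5] := HT _ _ Hw (Hpick _ Hw).
  have [Hw1 _ _] := HB _ _ Hw; have [wA _] := A1_in Hw1.
  rewrite /g in_setX /=.
  have -> : w :\: Tset (pickq w) \in [set R : {set 'I_n} | #|R| == r - 5].
    by rewrite inE cardsD (setIidPr S5) C5 (Hunif _ wA).
  rewrite andbT.
  move: (pickq w) (Hpick w Hw) => [[[a b] c] d]; rewrite /Q /cond !in_setX /= !inE.
  by case/and5P => /andP[_ ->] /andP[_ ->] _ /andP[_ ->] /andP[_ ->].
have Hcard := subset_leq_card Himg.
rewrite (card_in_imset ginj) cardsX card_draws card_ord /Q !cardsX in Hcard.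
have [Hu1'' _ _] := HB _ _ Hu1; have [u1A _] := A1_in Hu1''.
have [Hu2'' _ _] := HB _ _ Hu2; have [u2A _] := A1_in Hu2''.
have F1 : #|f u1| <= r.
  rewrite -(Hunif _ u1A); apply: subset_leq_card; apply/subsetP => c Hc.
  by have [] := Hfu1c c Hc.
have F2 : #|f u2| <= r.
  rewrite -(Hunif _ u2A); apply: subset_leq_card; apply/subsetP => c Hc.
  by have [] := Hfu2c c Hc.
have Vj : #|vj| = r by apply: Hunif; apply: A0A'.
have rn : r <= n by rewrite -(Hunif _ u1A); apply: leq_trans (max_card _) _; rewrite card_ord.
have C0 : 0 < 'C(n, r - 5) by rewrite bin_gt0; apply: leq_trans (leq_subr 5 r) rn.
have P4 : #|vj| * #|vj| * #|f u1| * #|f u2| <= r ^ 4.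
  by rewrite Vj !expnS expn0 muln1 mulnA mulnA; apply: leq_mul => //; apply: leq_mul.
have := leq_trans Hbig Hcard.
have := leq_mul P4 (leqnn 'C(n, r - 5)).
rewrite expnS.
move: C0; set C := 'C(n, r - 5); set K := r ^ 4 * C => C0.
have r0 : 0 < r by apply: leq_trans _ r5.
have K0 : 0 < K by rewrite /K muln_gt0 C0 expn_gt0 r0.
rewrite -/K; move: (#|vj| * #|vj| * #|f u1| * #|f u2| * C) => M.
rewrite -mulnA -/K => HMK HrK.
have := leq_trans HrK HMK; rewrite -{2}(mul1n K) leq_pmul2r // => r1.
by have := leq_trans r5 r1.
Qed.
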